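(* Let $\mathbb{K}$ be a field, $m<n$, and let $A \in \mathbb{K}[x]^{m\times n}$ have full rank $m$, with Popov form $P \in \mathbb{K}[x]^{m\times n}$. Let $C \in \mathbb{K}[x]^{(n-m)\times n}$ be such that the $n\times n$ matrix $\begin{bmatrix} A \\ C\end{bmatrix}$ is nonsingular and $\min(\mathrm{rdeg}(C)) > \deg(P)$. Let $\hat P$ be the Popov form of $\begin{bmatrix} A \\ C\end{bmatrix}$. Then $C$ is a completion of $A$ if and only if the multiset of entries of $\mathrm{rdeg}(\hat P)$ contains the multiset of entries of $\mathrm{rdeg}(C)$. Moreover, in this case, $P$ is equal to the submatrix of $\hat P$ formed by its rows of degree less than $\min(\mathrm{rdeg}(C))$.
   Context: For a row vector $p=[p_1,\dots,p_n]\in\mathbb{K}[x]^{1\times n}$, $\deg(p)=\max_j \deg(p_j)$ (with $\deg 0=-\infty$). For a matrix $M$, $\mathrm{rdeg}(M)$ is the tuple of degrees of its rows and $\deg(M)$ the maximum degree of its entries. If $M\in\mathbb{K}[x]^{k\times n}$ has no zero row, its leading matrix $\mathrm{lm}(M)\in\mathbb{K}^{k\times n}$ has $(i,j)$ entry equal to the coefficient of degree $\deg(\text{row } i)$ of $M_{i,j}$. A matrix $R\in\mathbb{K}[x]^{k\times n}$ with $k\le n$ is (row) reduced if it has no zero row and $\mathrm{lm}(R)$ has full rank $k$. The pivot index of a nonzero row vector $p$ is the largest $j$ with $\deg(p_j)=\deg(p)$, and $p_j$ is its pivot entry. A matrix $P\in\mathbb{K}[x]^{k\times n}$ is in Popov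 form if it has no zero row, the pivot indices of its rows are strictly increasing, its pivot entries are monic, and in each column containing a pivot entry all other entries have degree strictly less than that pivot entry. The Popov form of a matrix $A$ of rank $r$ is the unique matrix in $\mathbb{K}[x]^{r\times n}$ in Popov form whose rows generate the same $\mathbb{K}[x]$-module as the rows of $A$. For $A\in\mathbb{K}[x]^{m\times n}$ of full rank $m<n$ with Popov form $P$, a completion of $A$ is any $C\in\mathbb{K}[x]^{(n-m)\times n}$ such that $\min(\mathrm{rdeg}(C))>\deg(P)$ and $\begin{bmatrix} P\\ C\end{bmatrix}$ is row reduced. *)

(* Defs.v *)
From HB Require Import structures.
From mathcomp Require Import all_boot all_order all_algebra fraction.
Set Implicit Arguments. Unset Strict Implicit. Unset Printing Implicit Defensive.
Import Order.TTheory GRing.Theory Num.Theory.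
Local Open Scope ring_scope.

Section PolyMat.
Variable K : fieldType.

(* Degrees are encoded through [size] : for p : {poly K},
   size p = deg p + 1, and size 0 = 0 encodes deg 0 = -oo.
   This is an order isomorphism {-oo} \cup N -> N, so all degree
   comparisons / multisets of degrees are faithfully represented. *)

(* rsize M i = deg(row i of M) + 1  (0 iff the row is zero) *)
Definition rsize k n (M : 'M[{poly K}]_(k, n)) (i : 'I_k) : nat :=
  (\max_(j < n) size (M i j))%N.

(* msize M = deg(M) + 1 (0 iff M = 0, in particular if k = 0) *)
Definition msize k n (M : 'M[{poly K}]_(k, n)) : nat :=
  (\max_(i < k) rsize M i)%N.

Definition rdegs k n (M : 'M[{poly K}]_(k, n)) : seq nat :=
  [seq rsize M i | i <- enum 'I_k].

Definition no_zero_row k n (M : 'M[{poly K}]_(k, n)) : Prop :=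
  forall i : 'I_k, (0 < rsize M i)%N.

Definition lmat k n (M : 'M[{poly K}]_(k, n)) : 'M[K]_(k, n) :=
  \matrix_(i < k, j < n) (M i j)`_((rsize M i).-1).

Definition row_reduced k n (M : 'M[{poly K}]_(k, n)) : Prop :=
  (k <= n)%N /\ no_zero_row M /\ \rank (lmat M) = k.

Definition is_pivot k n (M : 'M[{poly K}]_(k, n)) (i : 'I_k) (j : 'I_n) : Prop :=
  size (M i j) = rsize M i /\
  forall j' : 'I_n, (j < j')%N -> (size (M i j') < rsize M i)%N.

Definition popov k n (M : 'M[{poly K}]_(k, n)) : Prop :=
  no_zero_row M /\
  exists piv : 'I_k -> 'I_n,
    [/\ forall i, is_pivot M i (piv i),
        forall i i' : 'I_k, (i < i')%N -> (piv i < piv i')%N,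
        forall i, M i (piv i) \is monic &
        forall i i' : 'I_k, i' != i -> (size (M i' (piv i)) < size (M i (piv i)))%N].

Definition in_rowmod k n (M : 'M[{poly K}]_(k, n)) (v : 'rV[{poly K}]_n) : Prop :=
  exists u : 'rV[{poly K}]_k, v = u *m M.

Definition same_rowmod k k' n (M : 'M[{poly K}]_(k, n)) (N : 'M[{poly K}]_(k', n)) : Prop :=
  forall v, in_rowmod M v <-> in_rowmod N v.

(* P is the Popov form of A (the Popov form is unique, so this characterises it) *)
Definition popov_form_of k r n (A : 'M[{poly K}]_(k, n)) (P : 'M[{poly K}]_(r, n)) : Prop :=
  popov P /\ same_rowmod A P.

Definition prank k n (M : 'M[{poly K}]_(k, n)) : nat :=
  \rank (map_mx (@tofrac _) M).

(* C is a completion of A, where P is the Popov form of A *)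
Definition completion m n (P : 'M[{poly K}]_(m, n)) (C : 'M[{poly K}]_(n - m, n)) : Prop :=
  (forall i, msize P < rsize C i)%N /\ row_reduced (col_mx P C).

Definition msubset (s t : seq nat) : Prop :=
  forall x : nat, (count_mem x s <= count_mem x t)%N.

End PolyMat.

(* Main.v *)
Require Import Defs.
From HB Require Import structures.
From mathcomp Require Import all_boot all_order all_algebra fraction.
From mathcomp Require Import zify perm.
Set Implicit Arguments. Unset Strict Implicit. Unset Printing Implicit Defensive.
Import Order.TTheory GRing.Theory Num.Theory.
Local Open Scope ring_scope.

Section Work.
Variable K : fieldType.
Implicit Types p q : {poly K}.

Lemma coefM_bound p q (a b : nat) :
  (size p <= a.+1)%N -> (size q <= b.+1)%N -> (p * q)`_(a + b) = p`_a * q`_b.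
Proof.
move=> sp sq; rewrite coefM (bigD1 (Ordinal (leq_addr b a : (a < (a + b).+1)%N))) //=.
rewrite addKn big1 ?addr0 // => i /eqP ne.
have [lt|ge] := ltnP i a.
  rewrite [q`__]nth_default ?mulr0 //; apply: leq_trans sq _.
  have := ltn_ord i; lia.
rewrite [p`__]nth_default ?mul0r //; apply: leq_trans sp _.
have : (nat_of_ord i <> a) by move=> e; apply: ne; apply: val_inj.
lia.
Qed.

Lemma prod_coef (I : Type) (r : seq I) (P : I -> {poly K}) (d : I -> nat) :
  (forall i, size (P i) <= (d i).+1)%N ->
  (size (\prod_(i <- r) P i)%R <= (\sum_(i <- r) d i).+1)%N /\
  (\prod_(i <- r) P i)`_(\sum_(i <- r) d i)%N = \prod_(i <- r) (P i)`_(d i).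
Proof.
move=> hs; elim: r => [|x r [IHs IHc]].
  by rewrite !big_nil size_poly1 coef1.
rewrite !big_cons; split.
  apply: leq_trans (size_mul_leq _ _) _; have := hs x; lia.
by rewrite coefM_bound // IHc.
Qed.

Lemma det_coef k (M : 'M[{poly K}]_k) (d : 'I_k -> nat) :
  (forall i j, size (M i j) <= (d i).+1)%N ->
  (size (\det M) <= (\sum_i d i).+1)%N /\
  (\det M)`_(\sum_i d i)%N = \det (\matrix_(i, j) (M i j)`_(d i)).
Proof.
move=> hs.
have H s : (size (\prod_i M i (s i))%R <= (\sum_i d i).+1)%N /\
   (\prod_i M i (s i))`_(\sum_i d i)%N = \prod_i (M i (s i))`_(d i).
  have := @prod_coef _ (index_enum (ordinal k)) (fun i => M i (s i)) d (fun i => hs i (s i)).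
  done.
split.
  apply/leq_sizeP => j hj; rewrite /determinant coef_sum big1 // => s _.
  rewrite mulr_sign; case: ifP => _; rewrite ?coefN;
  by rewrite nth_default ?oppr0 //; apply: leq_trans hj; case: (H s).
rewrite /determinant coef_sum; apply: eq_bigr => s _.
rewrite !mulr_sign; case: ifP => _; rewrite ?coefN (proj2 (H s)); [congr (- _)|];
  by apply: eq_bigr => i _; rewrite mxE.
Qed.


Lemma exists_max_idx k (Q : pred 'I_k) :
  (exists i, Q i) -> exists j, Q j /\ forall i, Q i -> (i <= j)%N.
Proof.
case=> i0 Qi0; case: (@arg_maxnP _ i0 Q (fun i => nat_of_ord i) Qi0) => j Qj H.
by exists j; split.
Qed.

Lemma exists_argmax k (Q : pred 'I_k) (F : 'I_k -> nat) :
  (exists i, Q i) -> exists2 i0, Q i0 & (\max_(i | Q i) F i)%N = F i0.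
Proof.
case=> i0 Qi0; exists [arg max_(i > i0 | Q i) F i]; last exact: bigmax_eq_arg.
by case: arg_maxnP.
Qed.

Definition vs n (v : 'rV[{poly K}]_n) : nat := (\max_(j < n) size (v 0%R j))%N.

Lemma rsize_row k n (M : 'M[{poly K}]_(k, n)) i : rsize M i = vs (row i M).
Proof. by rewrite /rsize /vs; apply: eq_bigr => j _; rewrite mxE. Qed.

Lemma size_le_rsize k n (M : 'M[{poly K}]_(k, n)) i j : (size (M i j) <= rsize M i)%N.
Proof. exact: leq_bigmax. Qed.

Lemma size_le_vs n (v : 'rV[{poly K}]_n) j : (size (v 0%R j) <= vs v)%N.
Proof. exact: leq_bigmax. Qed.

Lemma vs_eq0 n (v : 'rV[{poly K}]_n) : (vs v == 0%N) = (v == 0).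
Proof.
apply/idP/eqP => [h|->]; last first.
  by rewrite -leqn0; apply/bigmax_leqP => j _; rewrite mxE size_poly0.
apply/matrixP => i j; rewrite ord1 mxE; apply/eqP; rewrite -size_poly_eq0.
by have := size_le_vs v j; rewrite (eqP h) leqn0.
Qed.

Section Mul.
Variables (k n : nat) (u : 'rV[{poly K}]_k) (R : 'M[{poly K}]_(k, n)).

Definition Dm : nat := (\max_(i < k | u 0%R i != 0%R) (size (u 0%R i) + rsize R i))%N.
Definition wv : 'rV[K]_k := \row_i (u 0%R i)`_(Dm.-1 - rsize R i).

Lemma Dm_ge i : u 0%R i != 0 -> (size (u 0%R i) + rsize R i <= Dm)%N.
Proof. by move=> nz; exact: leq_bigmax_cond. Qed.

Lemma vs_mul_le : (vs (u *m R) <= Dm.-1)%N.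
Proof.
apply/bigmax_leqP => j _; rewrite mxE; apply/leq_sizeP => l hl.
rewrite coef_sum big1 // => i _.
have [->|nz] := eqVneq (u 0%R i) 0; first by rewrite mul0r coef0.
rewrite nth_default //; apply: leq_trans (size_mul_leq _ _) _.
have h1 := size_le_rsize R i j; have h2 := Dm_ge nz.
move: h1 h2 hl; set a := size (u 0%R i); set b := size (R i j); lia.
Qed.

Hypothesis nzr : no_zero_row R.

Lemma coef_top j : ((u *m R) 0%R j)`_(Dm.-2) = (wv *m lmat R) 0 j.
Proof.
rewrite !mxE coef_sum; apply: eq_bigr => i _; rewrite !mxE.
have [e|nz] := eqVneq (u 0%R i) 0; first by rewrite e mul0r !coef0 mul0r.
have h1 := size_le_rsize R i j; have h2 := Dm_ge nz; have h3 := nzr i.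
have h4 : (0 < size (u 0%R i))%N by rewrite size_poly_gt0.
move: h1 h2 h3 h4; set a := size (u 0%R i); set b := size (R i j) => h1 h2 h3 h4.
have -> : Dm.-2 = ((Dm.-1 - rsize R i) + (rsize R i).-1)%N by lia.
by rewrite coefM_bound //; rewrite -/a -/b; lia.
Qed.

Lemma wv_zero i : (u 0%R i == 0) || (size (u 0%R i) + rsize R i < Dm)%N -> wv 0%R i = 0.
Proof.
rewrite mxE; case/orP => [/eqP->|h]; first by rewrite coef0.
rewrite nth_default //; move: h; set a := size (u 0%R i); lia.
Qed.

Lemma wv_lead i : u 0%R i != 0 -> (size (u 0%R i) + rsize R i)%N = Dm -> wv 0%R i = lead_coef (u 0%R i).
Proof.
move=> nz e; rewrite mxE /lead_coef; congr (_`_ _).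
have := nzr i; move: e; set a := size (u 0%R i); lia.
Qed.

Lemma Dm_arg : u != 0 -> exists2 i0, u 0%R i0 != 0 & (size (u 0%R i0) + rsize R i0)%N = Dm.
Proof.
move=> nz; have [|i0 h0 e0] := @exists_argmax k (fun i => u 0%R i != 0) (fun i => (size (u 0%R i) + rsize R i)%N); last by exists i0.
apply/existsP; apply: contraR nz; rewrite negb_exists => /forallP h.
by apply/eqP/matrixP => a b; rewrite ord1 mxE; apply/eqP; rewrite -[_ == _]negbK h.
Qed.

Lemma Dm_ge2 : u != 0 -> (2 <= Dm)%N.
Proof.
case/Dm_arg => i nz <-; have := nzr i; rewrite -size_poly_gt0 in nz; lia.
Qed.

Lemma size_top_gt j : ((u *m R) 0%R j)`_(Dm.-2) != 0 -> (Dm.-1 <= size ((u *m R) 0%R j))%N.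
Proof.
move=> h; have [e|nz] := eqVneq u 0.
  by move: h; rewrite e mul0mx mxE coef0 eqxx.
have h2 := Dm_ge2 nz.
have : (Dm.-2 < size ((u *m R) 0%R j))%N.
  by rewrite ltnNge; apply: contra h => /leq_sizeP ->.
move: h2; set a := size _; lia.
Qed.

End Mul.

Lemma rowV_nz (R' : nzRingType) n (v : 'rV[R']_n) : v != 0 -> exists j, v 0%R j != 0.
Proof.
move=> nz; apply/existsP; apply: contraR nz; rewrite negb_exists => /forallP h.
by apply/eqP/matrixP => a b; rewrite ord1 mxE; apply/eqP; rewrite -[_ == _]negbK h.
Qed.

Definition reduced k n (R : 'M[{poly K}]_(k, n)) := no_zero_row R /\ row_free (lmat R).

Lemma pdp k n (R : 'M[{poly K}]_(k, n)) (u : 'rV_k) :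
  reduced R -> vs (u *m R) = (Dm u R).-1.
Proof.
case=> nzr rf; apply/eqP; rewrite eqn_leq vs_mul_le /=.
have [->|nz] := eqVneq u 0.
  by rewrite /Dm big1 // => i; rewrite mxE eqxx.
have [i0 nz0 e0] := Dm_arg R nz.
have wnz : wv u R != 0.
  apply/eqP => /matrixP /(_ 0 i0); rewrite (wv_lead nzr nz0 e0) mxE.
  by move/eqP; rewrite lead_coef_eq0 (negbTE nz0).
have : wv u R *m lmat R != 0 by rewrite mulmx_free_eq0.
case/rowV_nz => j; rewrite -coef_top // => /size_top_gt h.
apply: (leq_trans (h nzr)); apply: size_le_vs.
Qed.

Lemma pdp_support k n (R : 'M[{poly K}]_(k, n)) (u : 'rV_k) s i :
  reduced R -> (vs (u *m R) <= s)%N -> u 0%R i != 0 -> (rsize R i <= s)%N.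
Proof.
move=> rR; rewrite pdp // => h nz; have := Dm_ge R nz.
rewrite -size_poly_gt0 in nz; move: nz h; set a := size _; lia.
Qed.

Lemma reduced_inj k n (R : 'M[{poly K}]_(k, n)) (u : 'rV_k) :
  reduced R -> u *m R = 0 -> u = 0.
Proof.
move=> rR e; apply/eqP; apply: contraT => nz.
have := pdp u rR; rewrite e.
have -> : vs (0 : 'rV[{poly K}]_n) = 0%N by apply/eqP; rewrite vs_eq0.
have := Dm_ge2 rR.1 nz; lia.
Qed.


Lemma tri_piv (F : fieldType) k n (L : 'M[F]_(k, n)) (piv : 'I_k -> 'I_n) (w : 'rV[F]_k) (j : 'I_k) :
  (forall i i' : 'I_k, (i < i')%N -> (piv i < piv i')%N) ->
  (forall i, L i (piv i) = 1) -> (forall i (c : 'I_n), (piv i < c)%N -> L i c = 0) ->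
  (forall i : 'I_k, (j < i)%N -> w 0%R i = 0) ->
  (w *m L) 0%R (piv j) = w 0%R j /\ forall c : 'I_n, (piv j < c)%N -> (w *m L) 0%R c = 0.
Proof.
move=> inc h1 h0 hw; split.
  rewrite mxE (bigD1 j) //= h1 mulr1 big1 ?addr0 // => i /eqP ne.
  have [lt|gt] := ltnP i j.
    by rewrite h0 ?mulr0 // inc.
  have lt' : (j < i)%N.
    rewrite ltn_neqAle gt andbT; apply/eqP => e; apply: ne; exact: val_inj.
  by rewrite hw ?mul0r.
move=> c hc; rewrite mxE big1 // => i _.
have [lt|ge] := ltnP j i; first by rewrite hw ?mul0r.
rewrite h0 ?mulr0 //; apply: leq_ltn_trans hc.
have [e|ne] := eqVneq i j; first by rewrite e.
have : (i < j)%N by rewrite ltn_neqAle ge andbT; apply: contra ne => /eqP e; apply/eqP/val_inj.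
by move/inc/ltnW.
Qed.

Lemma size_le_coef0 p N : (size p <= N.+1)%N -> p`_N = 0 -> (size p <= N)%N.
Proof.
move=> h c; rewrite leqNgt; apply/negP => lt.
have e : size p = N.+1 by apply/eqP; rewrite eqn_leq h lt.
have : lead_coef p == 0 by rewrite /lead_coef e c.
by rewrite lead_coef_eq0 => /eqP pz; move: e; rewrite pz size_poly0.
Qed.

Section PopovFacts.
Variables (k n : nat) (P : 'M[{poly K}]_(k, n)) (piv : 'I_k -> 'I_n).
Hypotheses (hnz : no_zero_row P) (hpiv : forall i, is_pivot P i (piv i))
  (hinc : forall i i' : 'I_k, (i < i')%N -> (piv i < piv i')%N)
  (hmon : forall i, P i (piv i) \is monic).

Lemma lmat_piv i : lmat P i (piv i) = 1.
Proof.
rewrite mxE; case: (hpiv i) => e _; rewrite -e.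
by have := hmon i; rewrite /monic qualifE /lead_coef => /eqP.
Qed.

Lemma lmat_right i (c : 'I_n) : (piv i < c)%N -> lmat P i c = 0.
Proof.
move=> h; rewrite mxE nth_default //; case: (hpiv i) => _ /(_ c h).
have := hnz i; set a := size _; lia.
Qed.

Lemma popov_reduced : reduced P.
Proof.
split => //; apply: inj_row_free => v e; apply/eqP; apply: contraT => nz.
have [j [hj hmax]] : exists j, v 0%R j != 0 /\ forall i, v 0%R i != 0 -> (i <= j)%N.
  by apply: exists_max_idx; apply: rowV_nz.
have hw : forall i : 'I_k, (j < i)%N -> v 0%R i = 0.
  by move=> i lt; apply/eqP; apply: contraTT lt => /hmax; rewrite -leqNgt.
have [h _] := tri_piv hinc lmat_piv lmat_right hw.
by move: hj; rewrite -h e mxE eqxx.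
Qed.

Lemma popov_le : (k <= n)%N.
Proof.
have := popov_reduced; case=> _ /eqP <-; exact: rank_leq_col.
Qed.

Lemma K2 (u : 'rV_k) : u != 0 ->
  exists j, [/\ u 0%R j != 0, size ((u *m P) 0%R (piv j)) = vs (u *m P),
    vs (u *m P) = (size (u 0%R j) + rsize P j).-1 &
    forall c : 'I_n, (piv j < c)%N -> (size ((u *m P) 0%R c) < vs (u *m P))%N].
Proof.
move=> nz; have rP := popov_reduced; have ev := pdp u rP.
have [i0 nz0 e0] := Dm_arg P nz.
have wnz0 : wv u P 0%R i0 != 0 by rewrite (wv_lead hnz nz0 e0) lead_coef_eq0.
have [j [hj hmax]] : exists j, wv u P 0%R j != 0 /\ forall i, wv u P 0%R i != 0 -> (i <= j)%N.
  by apply: exists_max_idx; exists i0.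
have hw : forall i : 'I_k, (j < i)%N -> wv u P 0%R i = 0.
  by move=> i lt; apply/eqP; apply: contraTT lt => /hmax; rewrite -leqNgt.
have [h1 h2] := tri_piv hinc lmat_piv lmat_right hw.
have uj : u 0%R j != 0.
  by apply: contra hj => /eqP uz; apply/eqP; apply: wv_zero; rewrite uz eqxx.
have ej : (size (u 0%R j) + rsize P j)%N = Dm u P.
  apply/eqP; rewrite eqn_leq Dm_ge //=; rewrite leqNgt; apply: contra hj => lt.
  by apply/eqP; apply: wv_zero; rewrite lt orbT.
have D2 := Dm_ge2 hnz nz.
exists j; split => //.
- apply/eqP; rewrite eqn_leq; apply/andP; split; first exact: size_le_vs.
  rewrite ev; apply: size_top_gt => //; rewrite coef_top // h1 //.
- by rewrite ev ej.
move=> c hc; have hsz := size_le_vs (u *m P) c.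
have hc0 := coef_top u hnz c; rewrite h2 // in hc0.
rewrite ev in hsz *; have : (size ((u *m P) 0%R c) <= (Dm u P).-2)%N.
  apply: size_le_coef0 => //; move: hsz; set a := size _; lia.
set a := size _; lia.
Qed.

End PopovFacts.


Definition is_piv n (v : 'rV[{poly K}]_n) (c : 'I_n) :=
  size (v 0%R c) = vs v /\ forall c' : 'I_n, (c < c')%N -> (size (v 0%R c') < vs v)%N.

Lemma is_piv_uniq n (v : 'rV[{poly K}]_n) c1 c2 : is_piv v c1 -> is_piv v c2 -> c1 = c2.
Proof.
move=> [e1 h1] [e2 h2]; apply: val_inj => /=.
have [lt|ge] := ltnP c1 c2; first by have := h1 _ lt; rewrite e2 ltnn.
move: ge; rewrite leq_eqVlt => /orP [/eqP //|lt].
by have := h2 _ lt; rewrite e1 ltnn.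
Qed.

Lemma is_pivotP k n (M : 'M[{poly K}]_(k, n)) i c : is_pivot M i c -> is_piv (row i M) c.
Proof.
case=> e h; split; first by rewrite mxE e rsize_row.
by move=> c' lt; rewrite mxE -rsize_row; apply: h.
Qed.

Lemma rowmod_row k n (M : 'M[{poly K}]_(k, n)) i : in_rowmod M (row i M).
Proof. by exists (delta_mx 0 i); rewrite -rowE. Qed.

Lemma rowmod_sub k n (M : 'M[{poly K}]_(k, n)) v1 v2 :
  in_rowmod M v1 -> in_rowmod M v2 -> in_rowmod M (v1 - v2).
Proof. by case=> u1 -> [u2 ->]; exists (u1 - u2); rewrite mulmxBl. Qed.

Lemma mono_strict k n (f : 'I_k -> 'I_n) :
  (forall i i' : 'I_k, (i < i')%N -> (f i < f i')%N) ->
  forall i i' : 'I_k, (i <= i')%N -> (f i <= f i')%N.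
Proof.
move=> h i i'; rewrite leq_eqVlt => /orP [/eqP e|lt]; last exact/ltnW/h.
by have -> : i = i' by apply: val_inj.
Qed.

Lemma strict_inj k n (f : 'I_k -> 'I_n) :
  (forall i i' : 'I_k, (i < i')%N -> (f i < f i')%N) -> injective f.
Proof.
move=> h i i' e; apply: val_inj => /=; have [lt|ge] := ltnP i i'.
  by have := h _ _ lt; rewrite e ltnn.
move: ge; rewrite leq_eqVlt => /orP [/eqP //|lt].
by have := h _ _ lt; rewrite e ltnn.
Qed.

Lemma same_image_eq k n (f g : 'I_k -> 'I_n) :
  (forall i i' : 'I_k, (i < i')%N -> (f i < f i')%N) ->
  (forall i i' : 'I_k, (i < i')%N -> (g i < g i')%N) ->
  (forall i, exists j, f i = g j) -> (forall i, exists j, g i = f j) ->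
  forall i, f i = g i.
Proof.
move=> hf hg fg gf.
suff H : forall t (i : 'I_k), (i < t)%N -> f i = g i by move=> i; apply: (H i.+1).
elim=> [//|t IH] i; rewrite ltnS leq_eqVlt => /orP [/eqP ei|]; last exact: IH.
have [j ej] := fg i; have [j' ej'] := gf i.
have ij : (i <= j)%N.
  rewrite leqNgt; apply/negP => lt; have e : f j = g j by apply: IH; rewrite -ei.
  by have := hf _ _ lt; rewrite ej -e ltnn.
have ij' : (i <= j')%N.
  rewrite leqNgt; apply/negP => lt; have e : f j' = g j' by apply: IH; rewrite -ei.
  by have := hg _ _ lt; rewrite ej' e ltnn.
apply: val_inj; apply/eqP; rewrite eqn_leq.
have := mono_strict hg ij; have := mono_strict hf ij'; rewrite -ej -ej' => -> ->.
done.
Qed.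

Lemma stepA k n (P1 P2 : 'M[{poly K}]_(k, n)) piv1 piv2 :
  no_zero_row P1 -> (forall i, is_pivot P1 i (piv1 i)) ->
  no_zero_row P2 -> (forall i, is_pivot P2 i (piv2 i)) ->
  (forall i i' : 'I_k, (i < i')%N -> (piv2 i < piv2 i')%N) ->
  (forall i, P2 i (piv2 i) \is monic) ->
  (forall v, in_rowmod P1 v -> in_rowmod P2 v) ->
  forall i, exists j, piv1 i = piv2 j /\ (rsize P2 j <= rsize P1 i)%N.
Proof.
move=> nz1 hp1 nz2 hp2 hi2 hm2 sub i.
have [u eu] := sub _ (rowmod_row P1 i).
have unz : u != 0.
  apply/eqP => uz; have := nz1 i; rewrite rsize_row eu uz mul0mx.
  by have /eqP -> : vs (0 : 'rV[{poly K}]_n) == 0%N by rewrite vs_eq0.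
have [j [uj e1 e2 h]] := K2 nz2 hp2 hi2 hm2 unz.
rewrite -eu in e1 e2 h; exists j; split.
  exact: is_piv_uniq (is_pivotP (hp1 i)) (conj e1 h).
have ee : rsize P1 i = (size (u 0%R j) + rsize P2 j).-1 by rewrite rsize_row; exact: e2.
rewrite ee; rewrite -size_poly_gt0 in uj; move: uj; set a := size _; lia.
Qed.

Lemma popov_unique k n (P1 P2 : 'M[{poly K}]_(k, n)) :
  popov P1 -> popov P2 -> same_rowmod P1 P2 -> P1 = P2.
Proof.
case=> nz1 [piv1 [hp1 hi1 hm1 hc1]] [nz2 [piv2 [hp2 hi2 hm2 hc2]]] same.
have A12 := stepA nz1 hp1 nz2 hp2 hi2 hm2 (fun v => proj1 (same v)).
have A21 := stepA nz2 hp2 nz1 hp1 hi1 hm1 (fun v => proj2 (same v)).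
have epiv : forall i, piv1 i = piv2 i.
  apply: same_image_eq => // i.
  - by have [j [e _]] := A12 i; exists j.
  - by have [j [e _]] := A21 i; exists j.
have ers : forall i, rsize P1 i = rsize P2 i.
  move=> i; apply/eqP; rewrite eqn_leq.
  have [j [e1 l1]] := A12 i; have [j' [e2 l2]] := A21 i.
  have ej : j = i by apply: (strict_inj hi2); rewrite -e1 epiv.
  have ej' : j' = i by apply: (strict_inj hi1); rewrite -e2 epiv.
  by rewrite ej in l1; rewrite ej' in l2; rewrite l1 l2.
apply/row_matrixP => i; apply/eqP; rewrite -subr_eq0; apply/eqP.
set v := row i P1 - row i P2.
have [u eu] : in_rowmod P2 v.
  by apply: rowmod_sub; [apply: (proj1 (same _)); apply: rowmod_row | apply: rowmod_row].
apply/eqP; apply: contraT => vnz.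
have unz : u != 0 by apply: contra vnz => /eqP uz; rewrite eu uz mul0mx.
have [j [uj e1 e2 _]] := K2 nz2 hp2 hi2 hm2 unz.
rewrite -eu in e1 e2.
have ge : (rsize P2 j <= size (v 0%R (piv2 j)))%N.
  rewrite e1 e2; rewrite -size_poly_gt0 in uj; move: uj; set a := size _; lia.
have : (size (v 0%R (piv2 j)) < rsize P2 j)%N; last by rewrite ltnNge ge.
rewrite !mxE; have [eji|nji] := eqVneq j i.
  rewrite eji; have [s1 _] := hp1 i; have [s2 _] := hp2 i.
  rewrite -epiv in s2 *.
  have r1 := nz1 i.
  have hs : (size (P1 i (piv1 i) - P2 i (piv1 i))%R <= (rsize P2 i).-1.+1)%N.
    apply: leq_trans (size_add _ _) _; rewrite size_opp s1 s2 ers maxnn.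
    by rewrite -ers; move: r1; set a := rsize _ _; lia.
  have hc : (P1 i (piv1 i) - P2 i (piv1 i))`_((rsize P2 i).-1) = 0.
    have l1 : (P1 i (piv1 i))`_((rsize P2 i).-1) = 1.
      by rewrite -ers -s1; exact: (monicP (hm1 i)).
    have l2 : (P2 i (piv1 i))`_((rsize P2 i).-1) = 1.
      by rewrite -s2; have := hm2 i; rewrite -epiv => /monicP.
    by rewrite coefB l1 l2 subrr.
  have := size_le_coef0 hs hc; rewrite -ers; move: r1; set a := rsize _ _; set b := size _; lia.
apply: leq_ltn_trans (size_add _ _) _; rewrite size_opp gtn_max.
have nij : i != j by rewrite eq_sym.
have := hc1 _ _ nij; have := hc2 _ _ nij; have [s1 _] := hp1 j; have [s2 _] := hp2 j.
by rewrite -epiv in s2 *; rewrite s1 s2 ers => -> ->.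
Qed.


Local Notation fm M := (map_mx (@tofrac _) M).

Lemma rowmod_ms k k' n (M : 'M[{poly K}]_(k, n)) (N : 'M[{poly K}]_(k', n)) :
  (forall v, in_rowmod M v -> in_rowmod N v) -> (fm M <= fm N)%MS.
Proof.
move=> h; apply/row_subP => i; rewrite -map_row.
have [u ->] := h _ (rowmod_row M i); rewrite map_mxM; exact: submxMl.
Qed.

Lemma vec_ms k n (N : 'M[{poly K}]_(k, n)) v : in_rowmod N v -> (fm v <= fm N)%MS.
Proof. by case=> u ->; rewrite map_mxM; exact: submxMl. Qed.

Lemma reduced_prank k n (R : 'M[{poly K}]_(k, n)) : reduced R -> prank R = k.
Proof.
case=> nzr /row_freeP [B eB].
pose X := R *m map_mx polyC B.
pose d := fun i => (rsize R i).-1.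
have hs : forall i j, (size (X i j) <= (d i).+1)%N.
  move=> i j; apply/leq_sizeP => l hl; rewrite mxE coef_sum big1 // => c _.
  rewrite mxE coefMC nth_default ?mul0r //; apply: leq_trans _ hl.
  have := size_le_rsize R i c; have := nzr i; rewrite /d; set a := rsize _ _; set b := size _; lia.
have [_ hc] := det_coef hs.
have hX : \matrix_(i, j) (X i j)`_(d i) = 1%:M.
  rewrite -eB; apply/matrixP => i j; rewrite !mxE coef_sum; apply: eq_bigr => c _.
  by rewrite !mxE coefMC.
rewrite hX det1 in hc.
have dX : \det X != 0 by apply/eqP => e; move: hc; rewrite e coef0 => /eqP; rewrite eq_sym oner_eq0.
have uX : fm X \in unitmx.
  by rewrite unitmxE det_map_mx unitfE tofrac_eq0.
apply/eqP; rewrite eqn_leq rank_leq_row /=.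
rewrite -{1}(mxrank_unit uX) /X map_mxM; exact: mxrankM_maxl.
Qed.

Definition selv k (S : {pred 'I_k}) : 'I_#|S| -> 'I_k := @enum_val _ S.
Arguments selv {k} S _.

Lemma row_free_rowsub (F : fieldType) k c n (f : 'I_c -> 'I_k) (A : 'M[F]_(k, n)) :
  injective f -> row_free A -> row_free (rowsub f A).
Proof.
move=> fi /row_freeP [B eB]; apply/row_freeP.
exists (B *m (rowsub f (1%:M : 'M[F]_k))^T).
rewrite mulmxA rowsubE -(mulmxA _ A) eB mulmx1 -rowsubE.
by apply/matrixP => i j; rewrite !mxE (inj_eq fi) eq_sym.
Qed.

Lemma rsize_rowsub k c n (f : 'I_c -> 'I_k) (R : 'M[{poly K}]_(k, n)) i :
  rsize (rowsub f R) i = rsize R (f i).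
Proof. by rewrite /rsize; apply: eq_bigr => j _; rewrite mxE. Qed.

Lemma reduced_rowsub k c n (f : 'I_c -> 'I_k) (R : 'M[{poly K}]_(k, n)) :
  injective f -> reduced R -> reduced (rowsub f R).
Proof.
move=> fi [nzr rf]; split; first by move=> i; rewrite rsize_rowsub.
have -> : lmat (rowsub f R) = rowsub f (lmat R).
  by apply/matrixP => i j; rewrite !mxE rsize_rowsub.
exact: row_free_rowsub.
Qed.

Lemma supp_rowsub k n (S : {pred 'I_k}) (R : 'M[{poly K}]_(k, n)) (u : 'rV_k) :
  (forall i, u 0%R i != 0 -> i \in S) ->
  u *m R = (\row_l u 0%R (selv S l)) *m rowsub (selv S) R.
Proof.
move=> h; rewrite !mulmx_sum_row.
rewrite (bigID (fun i => i \in S)) /= [X in _ + X]big1 ?addr0; last first.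
  move=> i niS; have /eqP -> : u 0%R i == 0 by apply: contraNT niS; exact: h.
  by rewrite scale0r.
rewrite big_enum_val; apply: eq_bigr => l _; by rewrite row_rowsub mxE.
Qed.

Definition cnt k n (R : 'M[{poly K}]_(k, n)) (s : nat) : nat :=
  #|[pred i | (rsize R i <= s)%N]|.

Lemma cnt_le k k' n (R : 'M[{poly K}]_(k, n)) (R' : 'M[{poly K}]_(k', n)) s :
  reduced R -> reduced R' -> (forall v, in_rowmod R v -> in_rowmod R' v) ->
  (cnt R s <= cnt R' s)%N.
Proof.
move=> rR rR' sub; rewrite /cnt.
set S := [pred i | (rsize R i <= s)%N]; set S' := [pred i | (rsize R' i <= s)%N].
have rS := reduced_rowsub (@enum_val_inj _ S) rR.
have rS' := reduced_rowsub (@enum_val_inj _ S') rR'.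
have := reduced_prank rS; have := reduced_prank rS'; rewrite /prank => e' e.
rewrite -[X in (X <= _)%N]e -[X in (_ <= X)%N]e'.
apply: mxrankS; apply/row_subP => l; rewrite -map_row row_rowsub.
have [u eu] := sub _ (rowmod_row R (selv S l)).
have hsupp : forall i, u 0%R i != 0 -> i \in S'.
  move=> i nz; rewrite inE /=; apply: (pdp_support rR' _ nz); rewrite -eu -rsize_row.
  by have := enum_valP l; rewrite inE.
rewrite eu (supp_rowsub R' hsupp) map_mxM; exact: submxMl.
Qed.



Lemma rowmat_of_rows k k' n (M : 'M[{poly K}]_(k, n)) (N : 'M[{poly K}]_(k', n)) :
  (forall i, in_rowmod N (row i M)) -> exists U, M = U *m N.
Proof.
move=> h; have [u hu] := fin_all_exists h.
exists (\matrix_(i, j) (u i) 0%R j); apply/row_matrixP => i.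
by rewrite row_mul hu; congr (_ *m _); apply/rowP => j; rewrite !mxE.
Qed.

Lemma rowmod_rows k k' n (M : 'M[{poly K}]_(k, n)) (N : 'M[{poly K}]_(k', n)) :
  (forall i, in_rowmod N (row i M)) -> forall v, in_rowmod M v -> in_rowmod N v.
Proof.
move=> /rowmat_of_rows [U ->] v [u ->]; exists (u *m U); by rewrite mulmxA.
Qed.

Lemma rowmod_mat k k' n (M : 'M[{poly K}]_(k, n)) (N : 'M[{poly K}]_(k', n)) :
  (forall v, in_rowmod M v -> in_rowmod N v) -> exists U, M = U *m N.
Proof. by move=> h; apply: rowmat_of_rows => i; apply: h; apply: rowmod_row. Qed.

Lemma cast_rowmod k k' n (e : k = k') (X : 'M[{poly K}]_(k, n)) v :
  in_rowmod (castmx (e, erefl n) X) v <-> in_rowmod X v.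
Proof. by case: k' / e; rewrite castmx_id. Qed.

Lemma col_rowmod m k n (A P : 'M[{poly K}]_(m, n)) (C : 'M[{poly K}]_(k, n)) :
  (forall v, in_rowmod A v -> in_rowmod P v) ->
  forall v, in_rowmod (col_mx A C) v -> in_rowmod (col_mx P C) v.
Proof.
move=> h v [u ->]; rewrite -[u]hsubmxK mul_row_col.
have [w ew] := h _ (ex_intro _ (lsubmx u) erefl).
by exists (row_mx w (rsubmx u)); rewrite mul_row_col -ew.
Qed.

Lemma fm_inj k n (X Y : 'M[{poly K}]_(k, n)) : fm X = fm Y -> X = Y.
Proof.
move=> /matrixP h; apply/matrixP => i j; have := h i j; rewrite !mxE.
by move/eqP; rewrite tofrac_eq => /eqP.
Qed.

Lemma sum_cast k k' n (e : k = k') (X : 'M[{poly K}]_(k, n)) (g : nat -> nat) :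
  (\sum_(i < k') g (rsize (castmx (e, erefl n) X) i) = \sum_(i < k) g (rsize X i))%N.
Proof. by case: k' / e; rewrite castmx_id. Qed.

Lemma lmat_cast k k' n (e : k = k') (X : 'M[{poly K}]_(k, n)) :
  lmat (castmx (e, erefl n) X) = castmx (e, erefl n) (lmat X).
Proof. by case: k' / e; rewrite !castmx_id. Qed.

Lemma rank_cast (F : fieldType) k k' n (e : k = k') (X : 'M[F]_(k, n)) :
  \rank (castmx (e, erefl n) X) = \rank X.
Proof. by case: k' / e; rewrite castmx_id. Qed.

Lemma fm_cast k k' n (e : k = k') (X : 'M[{poly K}]_(k, n)) :
  fm (castmx (e, erefl n) X) = castmx (e, erefl n) (fm X).
Proof. by case: k' / e; rewrite !castmx_id. Qed.

Lemma rsize_col_u m k n (P : 'M[{poly K}]_(m, n)) (C : 'M[{poly K}]_(k, n)) i :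
  rsize (col_mx P C) (lshift k i) = rsize P i.
Proof. by rewrite /rsize; apply: eq_bigr => j _; rewrite col_mxEu. Qed.

Lemma rsize_col_d m k n (P : 'M[{poly K}]_(m, n)) (C : 'M[{poly K}]_(k, n)) i :
  rsize (col_mx P C) (rshift m i) = rsize C i.
Proof. by rewrite /rsize; apply: eq_bigr => j _; rewrite col_mxEd. Qed.


Lemma enum_filter k (S : {pred 'I_k}) : enum S = [seq i <- enum 'I_k | S i].
Proof. rewrite enumT /enum_mem. by apply: eq_filter => i. Qed.

Lemma selv_incr k (S : {pred 'I_k}) (l l' : 'I_#|S|) : (l < l')%N -> (selv S l < selv S l')%N.
Proof.
move=> lt; have x0 := selv S l; rewrite /selv !(enum_val_nth x0).
have hs : sorted (relpre val ltn) (enum S).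
  rewrite enum_filter; apply: sorted_filter; first by move=> a b c; apply: ltn_trans.
  by rewrite -sorted_map val_enum_ord iota_ltn_sorted.
apply: (sorted_ltn_nth _ x0 hs) => //; first by move=> a b c; apply: ltn_trans.
  by rewrite inE -cardE.
by rewrite inE -cardE.
Qed.

Lemma enum_sel_seq (T : Type) k (S : {pred 'I_k}) (F : 'I_k -> T) :
  [seq F i | i <- enum 'I_k & S i] = [seq F (selv S l) | l <- enum 'I_#|S|].
Proof.
rewrite -enum_filter.
have -> : [seq F (selv S l) | l <- enum 'I_#|S|] = map F (map (selv S) (enum 'I_#|S|)).
  by rewrite -map_comp.
congr (map F _).
case: (posnP #|S|) => [c0|cpos].
  have /size0nil -> : size (enum S) = 0%N by rewrite -cardE.
  by have /size0nil -> : size (enum 'I_#|S|) = 0%N by rewrite size_enum_ord.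
have x0 := selv S (Ordinal cpos).
apply: (@eq_from_nth _ x0); first by rewrite size_map size_enum_ord cardE.
move=> i; rewrite -cardE => hi.
rewrite (nth_map (Ordinal cpos)) ?size_enum_ord //.
rewrite (nth_ord_enum _ (Ordinal hi)) /selv (enum_val_nth x0) //.
Qed.


Lemma popov_rowsub k c n (f : 'I_c -> 'I_k) (X : 'M[{poly K}]_(k, n)) :
  (forall l l' : 'I_c, (l < l')%N -> (f l < f l')%N) -> popov X -> popov (rowsub f X).
Proof.
move=> hf [nz [piv [hp hi hm hc]]]; split; first by move=> l; rewrite rsize_rowsub.
exists (fun l => piv (f l)); split.
- move=> l; case: (hp (f l)) => e h; split; first by rewrite mxE rsize_rowsub.
  by move=> j' lt; rewrite mxE rsize_rowsub; exact: h.
- by move=> l l' lt; apply: hi; apply: hf.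
- by move=> l; rewrite mxE.
move=> l l' ne; rewrite !mxE; apply: hc; apply: contra ne => /eqP e; apply/eqP.
exact: (strict_inj hf).
Qed.

Lemma low_lemma m k N n (P : 'M[{poly K}]_(m, n)) (C : 'M[{poly K}]_(k, n))
  (Ph : 'M[{poly K}]_(N, n)) (S : {pred 'I_N}) :
  same_rowmod (col_mx P C) Ph -> row_free (fm (col_mx P C)) -> \rank (fm P) = m ->
  (forall v, in_rowmod P v -> in_rowmod (rowsub (selv S) Ph) v) -> (#|S| <= m)%N ->
  same_rowmod (rowsub (selv S) Ph) P.
Proof.
move=> hQ rfQ rP sub cS; set PS := rowsub (selv S) Ph.
have h1 : (fm P <= fm PS)%MS by apply: rowmod_ms.
have h2 : (fm PS <= fm P)%MS.
  have e := (mxrank_leqif_eq h1).2.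
  have : (\rank (fm P) == \rank (fm PS)).
    rewrite eqn_leq (mxrankS h1) /= rP; apply: leq_trans (rank_leq_row _) cS.
  by rewrite e => /andP [].
move=> v; split; last exact: sub.
apply: rowmod_rows => l.
have [u eu] : in_rowmod (col_mx P C) (row l PS).
  by apply: (proj2 (hQ _)); rewrite row_rowsub; apply: rowmod_row.
have hv : (fm (row l PS) <= fm P)%MS.
  by apply: submx_trans h2; rewrite map_row; apply: row_sub.
have [z ez] := submxP hv.
rewrite -[u]hsubmxK mul_row_col in eu.
have e0 : row_mx (fm (lsubmx u) - z) (fm (rsubmx u)) *m fm (col_mx P C) = 0.
  rewrite map_col_mx mul_row_col mulmxBl -!map_mxM addrAC -map_mxD -eu ez.
  by rewrite subrr.
move/eqP: e0; rewrite mulmx_free_eq0 // row_mx_eq0 => /andP [_ /eqP h0].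
rewrite eu; have -> : rsubmx u = 0 by apply: fm_inj; rewrite h0 map_mx0.
by rewrite mul0mx addr0; exists (lsubmx u).
Qed.


Lemma msub_ex (s t : seq nat) :
  (forall x, (count_mem x s <= count_mem x t)%N) -> exists r, perm_eq t (s ++ r).
Proof.
elim: s t => [|a s IH] t h; first by exists t.
have at_ : a \in t.
  by rewrite -has_pred1 has_count; apply: leq_trans (h a); rewrite /= eqxx.
have [r hr] : exists r, perm_eq (rem a t) (s ++ r).
  apply: IH => x; rewrite count_rem at_ /=.
  have := h x; rewrite /= eq_sym; case: (x == a); rewrite /=; lia.
exists r; apply: perm_trans (perm_to_rem at_) _.
by rewrite /= perm_cons.
Qed.

Lemma msub_size (s t : seq nat) :
  (forall x, (count_mem x s <= count_mem x t)%N) -> (size s <= size t)%N.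
Proof. by case/msub_ex => r /perm_size ->; rewrite size_cat leq_addr. Qed.

Lemma msub_perm (s t : seq nat) :
  (forall x, (count_mem x s <= count_mem x t)%N) -> size s = size t -> perm_eq s t.
Proof.
case/msub_ex => r hr e; have := perm_size hr; rewrite size_cat -e.
move/eqP; rewrite -{1}[size s]addn0 eqn_add2l eq_sym size_eq0 => /eqP r0.
by rewrite perm_sym; rewrite r0 cats0 in hr.
Qed.

Lemma count_card k (p : pred 'I_k) : count p (enum 'I_k) = #|[pred i | p i]|.
Proof. by rewrite cardE (enum_filter [pred i | p i]) size_filter. Qed.

Lemma count_rdegs k n (M : 'M[{poly K}]_(k, n)) x :
  count_mem x (rdegs M) = #|[pred i | rsize M i == x]|.
Proof.
rewrite /rdegs count_map -count_card; apply: eq_count => i /=; by rewrite eq_sym.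
Qed.

Lemma card_eq_from k k' n (R : 'M[{poly K}]_(k, n)) (R' : 'M[{poly K}]_(k', n)) :
  (forall s, cnt R s = cnt R' s) ->
  forall x, #|[pred i | rsize R i == x]| = #|[pred i | rsize R' i == x]|.
Proof.
have H : forall k (R : 'M[{poly K}]_(k, n)) x,
    #|[pred i | rsize R i == x.+1]| = (cnt R x.+1 - cnt R x)%N.
  move=> k0 R0 x; rewrite /cnt.
  have e1 : #|[predI [pred i | rsize R0 i <= x.+1] & [pred i | rsize R0 i <= x]]%N|
      = #|[pred i | rsize R0 i <= x]%N|.
    by apply: eq_card => i; rewrite !inE; case: leqP => h; rewrite ?andbT ?andbF //; lia.
  have e2 : #|[predD [pred i | rsize R0 i <= x.+1] & [pred i | rsize R0 i <= x]]%N|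
      = #|[pred i | rsize R0 i == x.+1]|.
    apply: eq_card => i; rewrite !inE; set r := rsize R0 i.
    by case: (ltngtP r x.+1) => h; rewrite ?andbF ?andbT //=; lia.
  by rewrite -(cardID [pred i | rsize R0 i <= x]%N [pred i | rsize R0 i <= x.+1]%N) e1 e2 addKn.
have H0 : forall k (R : 'M[{poly K}]_(k, n)), #|[pred i | rsize R i == 0%N]| = cnt R 0.
  by move=> k0 R0; apply: eq_card => i; rewrite !inE leqn0.
move=> h [|x]; first by rewrite !H0 h.
by rewrite !H !h.
Qed.

Lemma card_col m k n (P : 'M[{poly K}]_(m, n)) (C : 'M[{poly K}]_(k, n)) (q : pred nat) :
  #|[pred i | q (rsize (col_mx P C) i)]| = (#|[pred i | q (rsize P i)]| + #|[pred j | q (rsize C j)]|)%N.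
Proof.
rewrite -!sum1_card big_split_ord /=; congr (_ + _)%N; apply: eq_bigl => i;
by rewrite !inE ?rsize_col_u ?rsize_col_d.
Qed.

Lemma sum_rows c n (g : 'rV[{poly K}]_n -> nat) (X : 'M[{poly K}]_(c, n)) :
  (\sum_(l < c) g (row l X))%N = (\sum_(v <- [seq row l X | l <- enum 'I_c]) g v)%N.
Proof. by rewrite big_map big_enum. Qed.


Lemma popov_red k n (X : 'M[{poly K}]_(k, n)) : popov X -> reduced X.
Proof. by case=> nz [piv [hp hi hm hc]]; apply: (popov_reduced nz hp hi hm). Qed.

Lemma rmod_trans k1 k2 k3 n (X : 'M[{poly K}]_(k1, n)) (Y : 'M[{poly K}]_(k2, n))
  (Z : 'M[{poly K}]_(k3, n)) :
  (forall v, in_rowmod X v -> in_rowmod Y v) -> (forall v, in_rowmod Y v -> in_rowmod Z v) ->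
  forall v, in_rowmod X v -> in_rowmod Z v.
Proof. by move=> h1 h2 v /h1 /h2. Qed.

End Work.

Arguments selv {k} S _.
Local Notation fm M := (map_mx (@tofrac _) M).

Theorem lemma3p2 (K : fieldType) (m n : nat) (Hmn : (m < n)%N)
  (A P : 'M[{poly K}]_(m, n)) (C : 'M[{poly K}]_(n - m, n))
  (Phat : 'M[{poly K}]_(n, n)) :
  prank A = m ->
  popov_form_of A P ->
  \det (castmx (subnKC (ltnW Hmn), erefl n) (col_mx A C)) != 0 ->
  (forall i, msize P < rsize C i)%N ->
  popov_form_of (castmx (subnKC (ltnW Hmn), erefl n) (col_mx A C)) Phat ->
  (completion P C <-> msubset (rdegs C) (rdegs Phat)) /\
  (completion P C ->
     [seq row i Phat | i <- enum 'I_n & [forall j, rsize Phat i < rsize C j]%N]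
     = [seq row i P | i <- enum 'I_m]).
Proof.
move=> hA [popP sameAP] hdet hC [popPh sameMPh].
set e := subnKC (ltnW Hmn).
set M := castmx (e, erefl n) (col_mx A C).
set Q := col_mx P C.
have MQ : forall v, in_rowmod M v -> in_rowmod Q v.
  move=> v /cast_rowmod; apply: col_rowmod => w; exact: (proj1 (sameAP w)).
have QM : forall v, in_rowmod Q v -> in_rowmod M v.
  move=> v hv; apply/cast_rowmod; move: hv; apply: col_rowmod => w; exact: (proj2 (sameAP w)).
have sameQPh : same_rowmod Q Phat.
  move=> v; split => hv; first by apply: (proj1 (sameMPh v)); apply: QM.
  by apply: MQ; apply: (proj2 (sameMPh v)).
have rPh := popov_red popPh.
have rankP : \rank (fm P) = m.
  apply/eqP; rewrite eqn_leq rank_leq_row /=; rewrite -[X in (X <= _)%N]hA /prank.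
  by apply: mxrankS; apply: rowmod_ms => v; apply: (proj1 (sameAP v)).
have rfQ : row_free (fm Q).
  have uM : fm M \in unitmx by rewrite unitmxE det_map_mx unitfE tofrac_eq0.
  have h1 : (fm M <= fm Q)%MS by apply: rowmod_ms.
  rewrite /row_free eqn_leq rank_leq_row /=; apply: leq_trans (mxrankS h1).
  by rewrite (mxrank_unit uM) subnKC // ltnW.
have k0 : (0 < n - m)%N by rewrite subn_gt0.
pose j0 := [arg min_(j < Ordinal k0) rsize C j].
have hmin : forall j, (rsize C j0 <= rsize C j)%N.
  by rewrite /j0; case: arg_minnP => // j _ h j'; apply: h.
set T := rsize C j0.
have hPT : forall i, (rsize P i < T)%N.
  move=> i; apply: leq_ltn_trans (hC j0); exact: leq_bigmax.
set S := [pred i | [forall j, (rsize Phat i < rsize C j)%N]].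
have hS : forall i, (i \in S) = (rsize Phat i < T)%N.
  move=> i; rewrite inE; apply/forallP/idP => [/(_ j0) //|h j].
  exact: leq_trans h (hmin j).
set PS := rowsub (selv S) Phat.
have hsub : forall v, in_rowmod P v -> in_rowmod PS v.
  apply: rowmod_rows => i.
  have [u eu] : in_rowmod Phat (row i P).
    apply: (proj1 (sameQPh _)); exists (row_mx (delta_mx 0 i) 0).
    by rewrite mul_row_col mul0mx addr0 -rowE.
  rewrite eu; exists (\row_l u 0%R (selv S l)); apply: supp_rowsub => l nz.
  rewrite hS; apply: leq_ltn_trans (hPT i).
  by apply: (pdp_support rPh _ nz); rewrite -eu rsize_row.
have hcardge : (m <= #|S|)%N.
  rewrite -rankP; apply: leq_trans (mxrankS (rowmod_ms hsub)) _; exact: rank_leq_row.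
have key : (#|S| <= m)%N ->
    [seq row i Phat | i <- enum 'I_n & [forall j, rsize Phat i < rsize C j]%N]
     = [seq row i P | i <- enum 'I_m].
  move=> cS; have sPS := low_lemma sameQPh rfQ rankP hsub cS.
  have pPS : popov PS by apply: popov_rowsub => //; apply: selv_incr.
  have ec : #|S| = m by apply/eqP; rewrite eqn_leq cS hcardge.
  have gen : forall c (ec : c = m) (X : 'M[{poly K}]_(c, n)), popov X -> same_rowmod X P ->
      [seq row l X | l <- enum 'I_c] = [seq row i P | i <- enum 'I_m].
    by move=> c ec'; subst c => X pX sX; rewrite (popov_unique pX popP sX).
  rewrite -(gen _ ec PS pPS sPS).
  have := enum_sel_seq S (fun i => row i Phat).
  move=> ->; apply: eq_map => l; by rewrite row_rowsub.
have Tpos : (0 < T)%N by apply: leq_ltn_trans (hC j0).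
have cardS : #|S| = cnt Phat T.-1.
  by apply: eq_card => i; rewrite hS inE; move: Tpos; set r := rsize _ _; lia.
have cntQT : cnt Q T.-1 = m.
  rewrite /cnt /Q (card_col P C (fun r => r <= T.-1)%N).
  have -> : #|[pred i | (rsize P i <= T.-1)%N]| = m.
    rewrite -[in RHS](card_ord m); apply: eq_card => i; rewrite !inE.
    by have := hPT i; move: Tpos; set r := rsize _ _; lia.
  rewrite eq_card0 ?addn0 // => j; rewrite !inE.
  by have := hmin j; move: Tpos; set r := rsize _ _; lia.
have fwd : completion P C -> msubset (rdegs C) (rdegs Phat) /\ (#|S| <= m)%N.
  case=> _ [hle [nzQ rkQ]].
  have rQ : reduced Q by split => //; rewrite /row_free rkQ.
  have hcnt : forall s, cnt Q s = cnt Phat s.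
    move=> s0; apply/eqP; rewrite eqn_leq !cnt_le // => v; [exact: (proj2 (sameQPh v))|exact: (proj1 (sameQPh v))].
  have heq := card_eq_from hcnt.
  split; last by rewrite cardS -hcnt cntQT.
  move=> x; rewrite !count_rdegs -heq /Q (card_col P C (fun r => r == x)); exact: leq_addl.
have bwd : msubset (rdegs C) (rdegs Phat) -> completion P C.
  move=> hms.
  set sh := [seq rsize Phat i | i <- enum 'I_n & ~~ (i \in S)].
  have csh : forall x, count_mem x sh = #|[pred i | ~~ (i \in S) && (rsize Phat i == x)]|.
    move=> x; rewrite /sh count_map count_filter -count_card; apply: eq_count => i.
    by rewrite /= andbC eq_sym.
  have hcm : forall x, (count_mem x (rdegs C) <= count_mem x sh)%N.
    move=> x; rewrite csh; case: (ltnP x T) => hx.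
      rewrite count_rdegs eq_card0 // => j; rewrite !inE.
      by apply/negP => /eqP ej; have := hmin j; rewrite ej; move: hx; set r := rsize _ _; lia.
    apply: leq_trans (hms x) _; rewrite count_rdegs; apply: subset_leq_card.
    apply/subsetP => i; rewrite !inE => /eqP ei; rewrite ei eqxx andbT.
    apply/negP => /forallP /(_ j0); move: hx ei; rewrite -/T; set r := rsize Phat i; lia.
  have szC : size (rdegs C) = (n - m)%N by rewrite size_map size_enum_ord.
  have szsh : size sh = (n - #|S|)%N.
    rewrite size_map size_filter count_card.
    have hc : (#|S| + #|[predC S]|)%N = n by rewrite cardC (card_ord n).
    have -> : #|[pred i | ~~ (i \in S)]| = #|[predC S]| by apply: eq_card => i; rewrite !inE.
    move: hc; set c := #|S|; set d := #|[predC S]|; lia.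
  have cS : (#|S| <= m)%N.
    have := msub_size hcm; rewrite szC szsh.
    have : (#|S| <= n)%N by rewrite -[X in (_ <= X)%N](card_ord n); apply: max_card.
    lia.
  have hperm : perm_eq (rdegs C) sh.
    apply: msub_perm => //; rewrite szC szsh; congr (_ - _)%N; apply/eqP.
    by rewrite eqn_leq cS hcardge.
  have seqeq := key cS.
  split => //; split; first by rewrite subnKC // ltnW.
  split.
    move=> i; rewrite -(splitK i); case: (split i) => j /=.
      by rewrite /Q rsize_col_u; exact: popP.1.
    by rewrite /Q rsize_col_d; apply: leq_ltn_trans (hC j).
  set Qn := castmx (e, erefl n) Q.
  have QnPh : forall v, in_rowmod Qn v -> in_rowmod Phat v.
    by move=> v /cast_rowmod /(proj1 (sameQPh v)).
  have PhQn : forall v, in_rowmod Phat v -> in_rowmod Qn v.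
    by move=> v /(proj2 (sameQPh v)) ?; apply/cast_rowmod.
  have [V eV] := rowmod_mat QnPh; have [W eW] := rowmod_mat PhQn.
  have bnd : forall (X : 'M[{poly K}]_n) i j, (size (X i j) <= (rsize X i).-1.+1)%N.
    by move=> X i j; apply: leq_trans (size_le_rsize X i j) _; exact: leqSpred.
  have [sPh cPh] := det_coef (bnd Phat).
  have [sQn cQn] := det_coef (bnd Qn).
  have ldPh : \det (lmat Phat) != 0 by have := rPh.2; rewrite row_free_unit unitmxE unitfE.
  have szPh : size (\det Phat) = (\sum_i (rsize Phat i).-1).+1.
    apply/eqP; rewrite eqn_leq sPh /= ltnNge; apply/negP => /leq_sizeP /(_ _ (leqnn _)) h.
    by move: ldPh; rewrite /lmat -cPh h eqxx.
  have dPh0 : \det Phat != 0 by rewrite -size_poly_gt0 szPh.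
  have hWV : \det W * \det V = 1.
    apply: (mulIf dPh0); rewrite mul1r -mulrA -det_mulmx -eV -det_mulmx -eW //.
  have dV0 : \det V != 0.
    by apply/eqP => h; move: hWV; rewrite h mulr0 => /eqP; rewrite eq_sym oner_eq0.
  have dW0 : \det W != 0.
    by apply/eqP => h; move: hWV; rewrite h mul0r => /eqP; rewrite eq_sym oner_eq0.
  have szV : size (\det V) = 1%N.
    have := congr1 (fun p : {poly K} => size p) hWV; rewrite /= size_mul // size_poly1.
    have := dW0; have := dV0; rewrite -!size_poly_gt0.
    set a := size (\det W); set b := size (\det V); lia.
  have szQn : size (\det Qn) = size (\det Phat) by rewrite eV det_mulmx size_mul // szV.
  have hsum : (\sum_i (rsize Qn i).-1 = \sum_i (rsize Phat i).-1)%N.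
    rewrite /Qn (sum_cast e Q predn) big_split_ord /=.
    rewrite (bigID (fun i => i \in S)) /=.
    congr (_ + _)%N.
      have := congr1 (fun s => \sum_(v <- s) (vs v).-1)%N seqeq.
      rewrite /= !big_map big_filter big_enum_cond /= => h.
      have e1 : (\sum_(i in S) (rsize Phat i).-1 =
          \sum_(i < n | [forall j, rsize Phat i < rsize C j]) (vs (row i Phat)).-1)%N.
        by apply: eq_big => [i|i _]; [rewrite inE | rewrite rsize_row].
      rewrite e1 h; apply: eq_bigr => i _; by rewrite /Q rsize_col_u rsize_row.
    have e2 : (\sum_(x <- sh) x.-1 = \sum_(i < n | i \notin S) (rsize Phat i).-1)%N.
      by rewrite /sh big_map big_filter big_enum_cond /=.
    have e3 : (\sum_(x <- rdegs C) x.-1 = \sum_(j < n - m) (rsize C j).-1)%N.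
      by rewrite /rdegs big_map big_enum /=.
    rewrite -e2 -(perm_big _ hperm) e3; apply: eq_bigr => j _; by rewrite /Q rsize_col_d.
  have dQ : \det (lmat Qn) != 0.
    have sz : size (\det Qn) = (\sum_i (rsize Qn i).-1).+1 by rewrite szQn szPh hsum.
    have : lead_coef (\det Qn) != 0 by rewrite lead_coef_eq0 -size_poly_gt0 sz.
    by rewrite /lead_coef sz /= cQn.
  have uQ : lmat Qn \in unitmx by rewrite unitmxE unitfE.
  have := mxrank_unit uQ; rewrite /Qn lmat_cast rank_cast => ->.
  by rewrite subnKC // ltnW.
split; first by split; [by case/fwd | exact: bwd].
by move=> /fwd [_ /key].
Qed.
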